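(* Let $r\ge0$ and let $A$ be an $E_{r+1}$-cofibrant dga. Then: (1) for all $n\ge0$ and $p\in\mathbb{Z}$, $(\mathrm{Dec}W)_pA^n=W_{p-n}A^n$; (2) the filtered dga $(A,\mathrm{Dec}W)$ is $E_r$-cofibrant.
   Context: Filtered dga's: a filtered dga over a field $\mathbf{k}$ of characteristic $0$ is a non-negatively graded commutative dga $A$ (differential of degree $+1$) with an increasing multiplicative regular exhaustive filtration $W$ by subcomplexes, with filtered unit ($\mathbf{k}$ trivially filtered). Deligne's décalage: $(\mathrm{Dec}W)_pA^n=\{x\in W_{p-n}A^n: dx\in W_{p-n-1}A^{n+1}\}$. $E_r$-cofibrant dga's: given a filtered dga $A$, an $E_r$-cofibrant extension of degree $n$ and weight $p$ is $A\otimes_\xi\Lambda V$ where $V$ is a vector space concentrated in degree $n$ and pure weight $p$ ($W_{p-1}V=0$, $W_pV=V$) and $\xi:V\to W_{p-r}A^{n+1}$ is linear with $d\circ\xi=0$; differential $dv=\xi(v)$ and filtration extended multiplicatively. An $E_r$-cofibrant dga is the colimit of a sequence of $E_r$-cofibrant extensions starting from $\mathbf{k}$. *)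

(* Defs.v *)
From HB Require Import structures.
From mathcomp Require Import all_boot all_order all_algebra.
Set Implicit Arguments. Unset Strict Implicit. Unset Printing Implicit Defensive.
Import Order.TTheory GRing.Theory Num.Theory.
Local Open Scope ring_scope.

(* A graded object is modelled as a total space T (a k-algebra) together with
   subspaces deg n (the homogeneous part of degree n, n : nat) such that
   T = (+)_n deg n (internal direct sum).  A filtration is a family of
   subspaces W p n of deg n (W_p A^n), p : int. *)

Section Defs.
Variable k : fieldType.

Definition subspace (T : lmodType k) (P : T -> Prop) : Prop :=
  P 0 /\ forall (c : k) x y, P x -> P y -> P (c *: x + y).

Definition graded_alg (T : algType k) (deg : nat -> T -> Prop) : Prop :=
  (forall n, subspace (deg n)) /\
  deg 0%N 1 /\
  (forall n m x y, deg n x -> deg m y -> deg (n + m)%N (x * y)) /\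
  (forall x, exists (N : nat) (f : nat -> T),
      (forall i, deg i (f i)) /\ x = \sum_(i < N) f i) /\
  (forall (N : nat) (f : nat -> T), (forall i, deg i (f i)) ->
      \sum_(i < N) f i = 0 -> forall i, (i < N)%N -> f i = 0).

Definition graded_comm_alg (T : algType k) (deg : nat -> T -> Prop) : Prop :=
  graded_alg deg /\
  forall n m x y, deg n x -> deg m y -> x * y = (-1) ^+ (n * m) * (y * x).

Definition filtered_dga (T : algType k) (deg : nat -> T -> Prop) (d : T -> T)
    (W : int -> nat -> T -> Prop) : Prop :=
  graded_comm_alg deg /\
  (forall (c : k) x y, d (c *: x + y) = c *: d x + d y) /\
  (forall n x, deg n x -> deg n.+1 (d x)) /\
  (forall x, d (d x) = 0) /\
  (forall n x y, deg n x -> d (x * y) = d x * y + (-1) ^+ n * (x * d y)) /\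
  (forall p n, subspace (W p n)) /\
  (forall p n x, W p n x -> deg n x) /\
  (forall p q n x, p <= q -> W p n x -> W q n x) /\
  (forall p q n m x y, W p n x -> W q m y -> W (p + q) (n + m)%N (x * y)) /\
  (forall p n x, W p n x -> W p n.+1 (d x)) /\
  (forall n, exists p, forall x, W p n x -> x = 0) /\
  (forall n x, deg n x -> exists p, W p n x) /\
  W 0 0%N 1.

Definition Dec (T : algType k) (W : int -> nat -> T -> Prop) (d : T -> T)
    (p : int) (n : nat) (x : T) : Prop :=
  W (p - n%:Z) n x /\ W (p - n%:Z - 1) n.+1 (d x).

Definition sub_dga (T : algType k) (deg : nat -> T -> Prop) (d : T -> T)
    (B : T -> Prop) : Prop :=
  subspace B /\ B 1 /\ (forall x y, B x -> B y -> B (x * y)) /\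
  (forall x, B x -> B (d x)) /\
  (forall x, B x -> exists (N : nat) (f : nat -> T),
      (forall i, deg i (f i) /\ B (f i)) /\ x = \sum_(i < N) f i).

Definition galg_hom_on (T : algType k) (degT : nat -> T -> Prop)
    (S : algType k) (degS : nat -> S -> Prop) (C : T -> Prop) (h : T -> S) :=
  (forall (c : k) x y, C x -> C y -> h (c *: x + y) = c *: h x + h y) /\
  h 1 = 1 /\
  (forall x y, C x -> C y -> h (x * y) = h x * h y) /\
  (forall n x, C x -> degT n x -> degS n (h x)).

(* C is (as a graded-commutative algebra) B (x) Lambda V, V a subspace of
   degree n, i.e. C is the coproduct of B and the free graded-commutative
   algebra on V: universal property. *)
Definition free_ext (T : algType k) (degT : nat -> T -> Prop)
    (B C V : T -> Prop) (n : nat) : Prop :=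
  (forall x, B x -> C x) /\ (forall x, V x -> C x /\ degT n x) /\ subspace V /\
  forall (S : algType k) (degS : nat -> S -> Prop), graded_comm_alg degS ->
  forall (f g : T -> S), galg_hom_on degT degS B f ->
    (forall (c : k) x y, V x -> V y -> g (c *: x + y) = c *: g x + g y) ->
    (forall x, V x -> degS n (g x)) ->
    (exists h, galg_hom_on degT degS C h /\
        (forall x, B x -> h x = f x) /\ (forall x, V x -> h x = g x)) /\
    (forall h1 h2, galg_hom_on degT degS C h1 -> galg_hom_on degT degS C h2 ->
        (forall x, B x -> h1 x = h2 x) -> (forall x, V x -> h1 x = h2 x) ->
        forall x, C x -> h1 x = h2 x).

(* generators of the multiplicatively extended filtration W_q of B (x) Lambda V
   in degree m: a * v_1 * ... * v_l with a in W_{q - l p} B^j, v_i in V,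
   j + l n = m *)
Definition ext_gen (T : algType k) (W : int -> nat -> T -> Prop)
    (B V : T -> Prop) (n : nat) (p : int) (q : int) (m : nat) (y : T) : Prop :=
  exists (j l : nat) (a : T) (vs : seq T),
    (j + l * n)%N = m /\ size vs = l /\ B a /\ W (q - l%:Z * p) j a /\
    (forall i, (i < l)%N -> V (nth 0 vs i)) /\
    y = a * \prod_(v <- vs) v.

Definition Er_ext (r : nat) (T : algType k) (deg : nat -> T -> Prop)
    (d : T -> T) (W : int -> nat -> T -> Prop) (B C : T -> Prop) : Prop :=
  exists (n : nat) (p : int) (V : T -> Prop),
    free_ext deg B C V n /\
    (forall v, V v -> B (d v) /\ W (p - r%:Z) n.+1 (d v)) /\
    (* the filtration on C is the multiplicative extension *)
    (forall q m x, C x ->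
       (W q m x <-> exists s : seq T,
          (forall y, y \in s -> ext_gen W B V n p q m y) /\
          x = \sum_(y <- s) y)).

(* E_r-cofibrant filtered dga: colimit (increasing union) of a sequence of
   E_r-cofibrant extensions starting from k (trivially filtered) *)
Definition Er_cofibrant (r : nat) (T : algType k) (deg : nat -> T -> Prop)
    (d : T -> T) (W : int -> nat -> T -> Prop) : Prop :=
  filtered_dga deg d W /\
  exists Bs : nat -> T -> Prop,
    (forall x, Bs 0%N x <-> exists c : k, x = c%:A) /\
    (forall q x, q < 0 -> Bs 0%N x -> W q 0%N x -> x = 0) /\
    (forall i, sub_dga deg d (Bs i)) /\
    (forall i, Er_ext r deg d W (Bs i) (Bs i.+1)) /\
    (forall x, exists i, Bs i x).

End Defs.

(* Main.v *)
Require Import Defs.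
From HB Require Import structures.
From mathcomp Require Import all_boot all_order all_algebra.
From mathcomp Require Import zify ring.
Import Order.TTheory GRing.Theory Num.Theory.
Local Open Scope ring_scope.

Section Helpers.
Variables (k : fieldType) (T : algType k) (deg : nat -> T -> Prop) (d : T -> T)
  (W : int -> nat -> T -> Prop).
Hypothesis HF : filtered_dga deg d W.

Ltac unpack := have [[[hsubd [hdeg1 [hdegM _]]] _] [hlin [hdeg [hdd [hleib [hsub [hWdeg [hmono [hmul [hWd [hreg [hex hunit]]]]]]]]]]]] := HF.

Lemma Wcast p p' n n' x : W p n x -> p = p' -> n = n' -> W p' n' x.
Proof. by move=> h <- <-. Qed.

Lemma W0 p n : W p n 0.
Proof. unpack. by case: (hsub p n). Qed.

Lemma Wadd p n x y : W p n x -> W p n y -> W p n (x + y).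
Proof. unpack. move=> hx hy. have [_ h] := hsub p n. by have := h 1 x y hx hy; rewrite scale1r. Qed.

Lemma dadd x y : d (x + y) = d x + d y.
Proof. unpack. by have := hlin 1 x y; rewrite !scale1r. Qed.

Lemma d0 : d 0 = 0.
Proof.
have h : d 0 = d 0 + d 0 by rewrite -dadd addr0.
have : d 0 + 0 = d 0 + d 0 by rewrite addr0 {1}h.
by move/addrI.
Qed.

Lemma dscale (c : k) x : d (c *: x) = c *: d x.
Proof. unpack. by have := hlin c x 0; rewrite !addr0 d0 addr0. Qed.

Lemma d1 : d 1 = 0.
Proof.
unpack.
have h : d 1 = d 1 + d 1.
  by move: (hleib 0%N 1 1 hdeg1); rewrite expr0 !mul1r mulr1.
have : d 1 + 0 = d 1 + d 1 by rewrite addr0 {1}h.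
by move/addrI.
Qed.

Lemma dsum (s : seq T) : d (\sum_(y <- s) y) = \sum_(y <- s) d y.
Proof. elim: s => [|a s IH]; first by rewrite !big_nil d0. by rewrite !big_cons dadd IH. Qed.

Lemma Wsign n : W 0 0 ((-1) ^+ n).
Proof.
unpack.
have hm1 : W 0 0 (-1).
  have [_ h] := hsub 0 0%N. by have := h (-1) 1 0 hunit (W0 _ _); rewrite addr0 scaleN1r.
elim: n => [|n IH]; first by rewrite expr0.
rewrite exprS. by have := hmul _ _ _ _ _ _ hm1 IH.
Qed.

Lemma Wsignmul n p m x : W p m x -> W p m ((-1) ^+ n * x).
Proof.
unpack. move=> h. have := hmul _ _ _ _ _ _ (Wsign n) h. by rewrite add0r add0n.
Qed.

Lemma Wprod n p (vs : seq T) :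
  (forall i, (i < size vs)%N -> W p n (nth 0 vs i) /\ W (p - 1) n.+1 (d (nth 0 vs i))) ->
  W ((size vs)%:Z * p) (size vs * n)%N (\prod_(v <- vs) v) /\
  W ((size vs)%:Z * p - 1) (size vs * n).+1 (d (\prod_(v <- vs) v)).
Proof.
unpack.
elim: vs => [|v vs IH] hv.
  rewrite big_nil d1 /=; split; last exact: W0.
  apply: Wcast hunit _ _ => //; by rewrite mul0r.
have [hv0 hdv0] := hv 0%N erefl.
have [IH1 IH2] : W ((size vs)%:Z * p) (size vs * n)%N (\prod_(v <- vs) v) /\
  W ((size vs)%:Z * p - 1) (size vs * n).+1 (d (\prod_(v <- vs) v)).
  by apply: IH => i hi; apply: (hv i.+1).
rewrite big_cons /=; split.
  apply: Wcast (hmul _ _ _ _ _ _ hv0 IH1) _ _; [ring | by rewrite mulSn].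
have hdeg0 : deg n v := hWdeg _ _ _ hv0.
rewrite (hleib _ _ _ hdeg0); apply: Wadd.
  apply: Wcast (hmul _ _ _ _ _ _ hdv0 IH1) _ _; [ring | by rewrite mulSn].
apply: Wsignmul.
apply: Wcast (hmul _ _ _ _ _ _ hv0 IH2) _ _; [ring | by rewrite mulSn addnS].
Qed.

Lemma key r (Bs : nat -> T -> Prop) :
  (forall x, Bs 0%N x <-> exists c : k, x = c%:A) ->
  (forall i, sub_dga deg d (Bs i)) ->
  (forall i, Er_ext r.+1 deg d W (Bs i) (Bs i.+1)) ->
  forall i x, Bs i x -> forall q m, W q m x -> W (q - 1) m.+1 (d x).
Proof.
move=> hB0 hsubB hext i.
elim: i => [|i IH] x hx q m hW.
  have [c ->] := (hB0 x).1 hx. by rewrite dscale d1 scaler0; exact: W0.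
unpack.
have [n [p [V [hfree [hxi hfilt]]]]] := hext i.
have [hBC [hVC [hVs _]]] := hfree.
have [_ [hB1 _]] := hsubB i.
have [s [hs ->]] := (hfilt q m x hx).1 hW.
rewrite dsum.
elim: s hs => [|y s IHs] hs; first by rewrite big_nil; exact: W0.
rewrite big_cons; apply: Wadd; last by apply: IHs => z hz; apply: hs; rewrite inE hz orbT.
have [j [l [a [vs [hjm [hsz [hBa [hWa [hV ->]]]]]]]]] := hs y (mem_head _ _).
have hVW : forall v, V v -> W p n v /\ W (p - 1) n.+1 (d v).
  move=> v hv; have [hCv _] := hVC v hv; split.
    apply/(hfilt p n v hCv).2; exists [:: v]; split; last by rewrite big_seq1.
    move=> z; rewrite inE => /eqP ->.
    exists 0%N, 1%N, 1, [:: v]; do !split => //.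
    - by rewrite add0n mul1n.
    - apply: Wcast hunit _ _ => //; ring.
    - by case.
    - by rewrite big_seq1 mul1r.
  have [_ hw] := hxi v hv. apply: hmono hw; lia.
have hV' : forall i0, (i0 < size vs)%N -> W p n (nth 0 vs i0) /\ W (p - 1) n.+1 (d (nth 0 vs i0)).
  by rewrite hsz => i0 hi0; apply: hVW; apply: hV.
have [hP1 hP2] := @Wprod n p vs hV'.
rewrite hsz in hP1 hP2.
have hdega : deg j a := hWdeg _ _ _ hWa.
rewrite (hleib _ _ _ hdega); apply: Wadd.
  have hda := IH a hBa _ _ hWa.
  apply: Wcast (hmul _ _ _ _ _ _ hda hP1) _ _; [ring | by rewrite -hjm].
apply: Wsignmul.
apply: Wcast (hmul _ _ _ _ _ _ hWa hP2) _ _; [ring | by rewrite -hjm addnS].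
Qed.

End Helpers.

Theorem lemma2p6 (k : fieldType) (hk : [pchar k] =i pred0) (r : nat)
    (T : algType k) (deg : nat -> T -> Prop) (d : T -> T)
    (W : int -> nat -> T -> Prop) :
  Er_cofibrant r.+1 deg d W ->
  (forall (n : nat) (p : int) (x : T), Dec W d p n x <-> W (p - n%:Z) n x) /\
  Er_cofibrant r deg d (Dec W d).
Proof.
move=> [HF [Bs [hB0 [hB0neg [hsubB [hext hexh]]]]]].
have K := @key k T deg d W HF r Bs hB0 hsubB hext.
have P1 : forall n p x, Dec W d p n x <-> W (p - n%:Z) n x.
  move=> n p x; split; first by case.
  move=> h; split=> //; have [i hi] := hexh x; exact: K hi _ _ h.
split=> //.
have [hgc [hlin [hdeg [hdd [hleib [hsub [hWdeg [hmono [hmul [hWd [hreg [hex hunit]]]]]]]]]]]] := HF.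
split.
  do 5 (split; first by []).
  split.
    move=> p n; have [h0 hs] := hsub (p - n%:Z) n; split; first exact/P1.
    by move=> c x y /P1 hx /P1 hy; apply/P1; apply: hs.
  split; first by move=> p n x /P1 /hWdeg.
  split.
    move=> p q n x hpq /P1 hx; apply/P1; apply: hmono hx; lia.
  split.
    move=> p q n m x y /P1 hx /P1 hy; apply/P1.
    apply: Wcast (hmul _ _ _ _ _ _ hx hy) _ _ => //; rewrite PoszD; ring.
  split.
    move=> p n x /P1 hx; apply/P1; have [i hi] := hexh x.
    apply: Wcast (K _ _ hi _ _ hx) _ _ => //; ring.
  split.
    move=> n; have [p hp] := hreg n; exists (p + n%:Z) => x /P1 hx; apply: hp.
    apply: Wcast hx _ _ => //; ring.
  split.
    move=> n x hx; have [p hp] := hex n x hx; exists (p + n%:Z); apply/P1.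
    apply: Wcast hp _ _ => //; ring.
  apply/P1; apply: Wcast hunit _ _ => //.
exists Bs; split=> //; split.
  move=> q x hq hx /P1 hW; apply: hB0neg hq hx _. by rewrite subr0 in hW.
split=> //; split=> // i.
have [n [p [V [hfree [hxi hfilt]]]]] := hext i.
have EG : forall q m y, ext_gen W (Bs i) V n p (q - m%:Z) m y <->
    ext_gen (Dec W d) (Bs i) V n (p + n%:Z) q m y.
  move=> q m y; split; case=> j [l [a [vs [hjm [hsz [hBa [hWa [hV hy]]]]]]]];
    exists j, l, a, vs; refine (conj hjm (conj hsz (conj hBa (conj _ (conj hV hy))))).
    apply/P1; apply: Wcast hWa _ _ => //; rewrite -hjm PoszD PoszM; ring.
  move/P1: hWa => hWa; apply: Wcast hWa _ _ => //; rewrite -hjm PoszD PoszM; ring.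
exists n, (p + n%:Z), V; split=> //; split.
  move=> v hv; have [hb hw] := hxi v hv; split=> //; apply/P1.
  apply: Wcast hw _ _ => //; rewrite -addn1 PoszD; ring.
move=> q m x hx; split.
  move=> /P1 /(hfilt _ _ _ hx) [s [hs ->]]; exists s; split=> // y /hs hy; exact: (EG q m y).1.
move=> [s [hs hxs]]; apply/P1; apply: (hfilt (q - m%:Z) m _ hx).2.
exists s; split=> // y /hs hy; exact: (EG q m y).2.
Qed.
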